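(* The variety of Gödel algebras (equivalently, Gödel–Dummett logic, with formulas identified up to logical equivalence) has unitary e-generalization type.
   Context: Gödel algebras are the algebras in the language $(\wedge,\vee,\to,0,1)$ forming the subvariety of Heyting algebras generated by totally ordered Heyting algebras; they are the equivalent algebraic semantics of Gödel–Dummett logic. For a variety $\mathsf V$: a symbolic e-generalization problem is a finite multiset $\{t_1,\dots,t_m\}$ of terms (elements of a free algebra $\mathbf F_{\mathsf V}(X)$, $X$ finite); a solution is a term $s\in\mathbf F_{\mathsf V}(Y)$ ($Y$ the variables of $s$) with substitutions (homomorphisms between free algebras) $\sigma_k$ such that $\sigma_k(s)=t_k$ for all $k$; $s\preceq u$ iff $\sigma(u)=s$ for some substitution $\sigma$. A problem has unitary type if its poset of solutions modulo $\preceq$-equivalence has a minimal complete set (pairwise incomparable elements such that every solution lies above one of them) of cardinality 1. A variety has unitary e-generalization type if every problem has unitary type. *)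

(* Defs.v *)
From Stdlib Require Import List.
Import ListNotations.

Inductive term : Type :=
  | Var : nat -> term
  | Bot : term
  | Top : term
  | And : term -> term -> term
  | Or  : term -> term -> term
  | Imp : term -> term -> term.

Record heyting_chain : Type := {
  hc_car  : Type;
  hc_meet : hc_car -> hc_car -> hc_car;
  hc_join : hc_car -> hc_car -> hc_car;
  hc_imp  : hc_car -> hc_car -> hc_car;
  hc_bot  : hc_car;
  hc_top  : hc_car;
  hc_meetC : forall a b, hc_meet a b = hc_meet b a;
  hc_joinC : forall a b, hc_join a b = hc_join b a;
  hc_meetA : forall a b c, hc_meet a (hc_meet b c) = hc_meet (hc_meet a b) c;
  hc_joinA : forall a b c, hc_join a (hc_join b c) = hc_join (hc_join a b) c;
  hc_meetJ : forall a b, hc_meet a (hc_join a b) = a;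
  hc_joinM : forall a b, hc_join a (hc_meet a b) = a;
  hc_join0 : forall a, hc_join a hc_bot = a;
  hc_meet1 : forall a, hc_meet a hc_top = a;
  (* residuation: a /\ c <= b  <->  c <= a -> b, where x <= y := x /\ y = x *)
  hc_resid : forall a b c,
      hc_meet (hc_meet a c) b = hc_meet a c <-> hc_meet c (hc_imp a b) = c;
  hc_total : forall a b, hc_meet a b = a \/ hc_meet b a = b
}.

Fixpoint eval (A : heyting_chain) (v : nat -> hc_car A) (t : term) : hc_car A :=
  match t with
  | Var n => v n
  | Bot => hc_bot A
  | Top => hc_top A
  | And t1 t2 => hc_meet A (eval A v t1) (eval A v t2)
  | Or t1 t2 => hc_join A (eval A v t1) (eval A v t2)
  | Imp t1 t2 => hc_imp A (eval A v t1) (eval A v t2)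
  end.

(* Equality in the free Gödel algebra: the identity t = u holds in the variety
   of Gödel algebras, i.e. (equivalently, since the variety is generated by
   them) in every totally ordered Heyting algebra under every valuation. *)
Definition godel_eq (t u : term) : Prop :=
  forall (A : heyting_chain) (v : nat -> hc_car A), eval A v t = eval A v u.

Fixpoint subst (sigma : nat -> term) (t : term) : term :=
  match t with
  | Var n => sigma n
  | Bot => Bot
  | Top => Top
  | And t1 t2 => And (subst sigma t1) (subst sigma t2)
  | Or t1 t2 => Or (subst sigma t1) (subst sigma t2)
  | Imp t1 t2 => Imp (subst sigma t1) (subst sigma t2)
  end.

(* s is a solution (generalization) of the problem ts (a finite multiset of
   terms, given as a list): for each t_k there is sigma_k with sigma_k(s) = t_k. *)
Definition is_solution (ts : list term) (s : term) : Prop :=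
  forall t, In t ts -> exists sigma, godel_eq (subst sigma s) t.

Definition prec (s u : term) : Prop :=
  exists sigma, godel_eq (subst sigma u) s.

Definition prec_equiv (s u : term) : Prop := prec s u /\ prec u s.

Definition minimal_complete_set (ts : list term) (M : term -> Prop) : Prop :=
  (forall m, M m -> is_solution ts m) /\
  (* pairwise incomparable (as classes modulo ≼-equivalence) *)
  (forall a b, M a -> M b -> prec a b -> prec_equiv a b) /\
  (forall u, is_solution ts u -> exists m, M m /\ prec m u).

(* The problem has unitary type: it has a minimal complete set whose
   cardinality (modulo ≼-equivalence) is 1. *)
Definition unitary_type (ts : list term) : Prop :=
  exists M : term -> Prop,
    minimal_complete_set ts M /\
    (exists m, M m) /\
    (forall a b, M a -> M b -> prec_equiv a b).

Definition unitary_e_generalization_type : Prop :=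
  forall ts : list term, ts <> [] -> unitary_type ts.

(* Main.v *)
Require Import Defs.
From Stdlib Require Import List Arith Classical.
Import ListNotations.

Section Chain.
Variable A : heyting_chain.
Notation meet := (hc_meet A).
Notation join := (hc_join A).
Notation imp := (hc_imp A).
Notation bot := (hc_bot A).
Notation top := (hc_top A).

Lemma meet_idem a : meet a a = a.
Proof.
  assert (H := hc_meetJ A a (meet a a)). rewrite hc_joinM in H. exact H.
Qed.

Lemma meet_bot_l x : meet bot x = bot.
Proof.
  assert (H := hc_meetJ A bot x). rewrite (hc_joinC A bot x), hc_join0 in H. exact H.
Qed.

Lemma meet_bot_r x : meet x bot = bot.
Proof. rewrite hc_meetC. apply meet_bot_l. Qed.

Lemma join_bot_l x : join bot x = x.
Proof. rewrite hc_joinC. apply hc_join0. Qed.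

Lemma meet_top_l x : meet top x = x.
Proof. rewrite hc_meetC. apply hc_meet1. Qed.

Lemma imp_bot_bot : imp bot bot = top.
Proof.
  assert (H := proj1 (hc_resid A bot bot top)).
  rewrite hc_meet1, meet_idem in H. specialize (H eq_refl).
  rewrite meet_top_l in H. exact H.
Qed.

Lemma neg_nonbot x : x <> bot -> imp x bot = bot.
Proof.
  intro Hx. set (c := imp x bot).
  assert (H := proj2 (hc_resid A x bot c)).
  assert (E : meet c (imp x bot) = c) by (unfold c; apply meet_idem).
  specialize (H E). rewrite meet_bot_r in H.
  destruct (hc_total A x c) as [H1|H1].
  - exfalso. apply Hx. rewrite <- H1. symmetry; exact H.
  - rewrite <- H1, hc_meetC. symmetry. exact H.
Qed.

Lemma imp_top_bot : imp top bot = bot.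
Proof.
  destruct (classic (top = bot)) as [E|E].
  - rewrite <- (hc_meet1 A (imp top bot)). rewrite E. apply meet_bot_r.
  - apply neg_nonbot; exact E.
Qed.
End Chain.

Definition ite (z a b : term) : term :=
  Or (And (Imp (Imp z Bot) Bot) a) (And (Imp z Bot) b).


Lemma eval_ite_bot A v z a b :
  eval A v z = hc_bot A -> eval A v (ite z a b) = eval A v b.
Proof.
  intro H. simpl. rewrite H, imp_bot_bot, imp_top_bot, meet_bot_l, meet_top_l.
  apply join_bot_l.
Qed.

Lemma eval_ite_nonbot A v z a b :
  eval A v z <> hc_bot A -> eval A v (ite z a b) = eval A v a.
Proof.
  intro H. simpl. rewrite (neg_nonbot A _ H), imp_bot_bot, meet_bot_l, meet_top_l.
  apply hc_join0.
Qed.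

Lemma eval_ext A v w t : (forall n, v n = w n) -> eval A v t = eval A w t.
Proof. intro H; induction t; simpl; congruence. Qed.

Lemma eval_subst A v s t :
  eval A v (subst s t) = eval A (fun n => eval A v (s n)) t.
Proof. induction t; simpl; congruence. Qed.

Lemma subst_comp s r t : subst r (subst s t) = subst (fun n => subst r (s n)) t.
Proof. induction t; simpl; congruence. Qed.

Lemma subst_ext s r t : (forall n, s n = r n) -> subst s t = subst r t.
Proof. intro H; induction t; simpl; congruence. Qed.

Lemma subst_id t : subst Var t = t.
Proof. induction t; simpl; congruence. Qed.

Lemma geq_trans a b c : godel_eq a b -> godel_eq b c -> godel_eq a c.
Proof. intros H1 H2 A v. rewrite H1; apply H2. Qed.

Lemma geq_subst s a b : godel_eq a b -> godel_eq (subst s a) (subst s b).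
Proof. intros H A v. rewrite !eval_subst. apply H. Qed.

Lemma geq_ite z a b a' b' : godel_eq a a' -> godel_eq b b' ->
  godel_eq (ite z a b) (ite z a' b').
Proof. intros H1 H2 A v. simpl. rewrite H1, H2. reflexivity. Qed.

Lemma ite_commute z s1 s2 u :
  godel_eq (subst (fun y => ite z (s1 y) (s2 y)) u) (ite z (subst s1 u) (subst s2 u)).
Proof.
  intros A v. destruct (classic (eval A v z = hc_bot A)) as [E|E].
  - rewrite eval_ite_bot by exact E. rewrite !eval_subst. apply eval_ext.
    intro n. apply eval_ite_bot; exact E.
  - rewrite eval_ite_nonbot by exact E. rewrite !eval_subst. apply eval_ext.
    intro n. apply eval_ite_nonbot; exact E.
Qed.

Lemma ite_top a b : godel_eq (ite Top a b) a.
Proof.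
  intros A v. destruct (classic (hc_top A = hc_bot A)) as [E|E].
  - rewrite <- (hc_meet1 A (eval A v a)), <- (hc_meet1 A (eval A v (ite Top a b))).
    rewrite E, !meet_bot_r. reflexivity.
  - apply eval_ite_nonbot. exact E.
Qed.

Lemma ite_bot a b : godel_eq (ite Bot a b) b.
Proof. intros A v. apply eval_ite_bot. reflexivity. Qed.

Definition ren (t : term) : term := subst (fun n => Var (2 * n)) t.

Fixpoint Gen (j : nat) (a : term) (l : list term) : term :=
  match l with
  | [] => a
  | b :: l' => ite (Var (2 * j + 1)) a (Gen (S j) b l')
  end.

Definition mk (h : nat -> term) (n : nat) : term :=
  if Nat.even n then Var (Nat.div2 n) else h (Nat.div2 n).

Lemma mk_ren h t : subst (mk h) (ren t) = t.
Proof.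
  unfold ren. rewrite subst_comp. rewrite <- (subst_id t) at 2.
  apply subst_ext. intro n. cbn [subst]. unfold mk.
  rewrite Nat.even_even, Nat.div2_double. reflexivity.
Qed.

Lemma mk_odd h j : mk h (2 * j + 1) = h j.
Proof. unfold mk. rewrite Nat.even_odd, Nat.div2_odd'. reflexivity. Qed.

Lemma gen_solution l : forall a j t, In t (a :: l) ->
  exists g, forall h, (forall i, j <= i -> h i = g i) ->
  godel_eq (subst (mk h) (Gen j (ren a) (map ren l))) t.
Proof.
  induction l as [|b l IH]; intros a j t Hin.
  - destruct Hin as [<-|[]]. exists (fun _ => Top). intros h _.
    simpl. rewrite mk_ren. intros A v; reflexivity.
  - destruct Hin as [<-|Hin].
    + exists (fun _ => Top). intros h Hh. cbn [Gen map ite subst].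
      rewrite mk_odd, Hh by apply le_n. rewrite mk_ren. apply ite_top.
    + destruct (IH b (S j) t Hin) as [g Hg].
      exists (fun i => if Nat.eqb i j then Bot else g i). intros h Hh. cbn [Gen map ite subst].
      rewrite mk_odd, Hh by apply le_n. rewrite Nat.eqb_refl.
      eapply geq_trans; [apply ite_bot|]. apply Hg.
      intros i Hi. rewrite Hh by (apply le_S_n; apply le_S; exact Hi).
      destruct (Nat.eqb_spec i j); [subst; exfalso; exact (Nat.nle_succ_diag_l _ Hi)|].
      reflexivity.
Qed.

Lemma gen_complete l : forall a j u,
  (forall t, In t (a :: l) -> exists s, godel_eq (subst s u) t) ->
  exists sg, godel_eq (subst sg u) (Gen j (ren a) (map ren l)).
Proof.
  induction l as [|b l IH]; intros a j u H.
  - destruct (H a (or_introl eq_refl)) as [s Hs].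
    exists (fun y => ren (s y)). simpl. unfold ren.
    rewrite <- subst_comp. apply geq_subst. exact Hs.
  - destruct (H a (or_introl eq_refl)) as [s Hs].
    destruct (IH b (S j) u (fun t Ht => H t (or_intror Ht))) as [s' Hs'].
    exists (fun y => ite (Var (2 * j + 1)) (ren (s y)) (s' y)).
    eapply geq_trans; [apply ite_commute|]. simpl.
    apply geq_ite; [|exact Hs'].
    unfold ren. rewrite <- subst_comp. apply geq_subst. exact Hs.
Qed.

Theorem theorem5p3 : unitary_e_generalization_type.
Proof.
  intros [|a l] Hne; [congruence|].
  set (m := Gen 0 (ren a) (map ren l)).
  exists (fun x => x = m). split; [split; [|split]|split].
  - intros x -> t Ht. destruct (gen_solution l a 0 t Ht) as [g Hg].
    exists (mk g). apply Hg. intros; reflexivity.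
  - intros x y -> -> _. split; exists Var; rewrite subst_id; intros A v; reflexivity.
  - intros u Hu. exists m. split; [reflexivity|].
    apply gen_complete. exact Hu.
  - exists m; reflexivity.
  - intros x y -> ->. split; exists Var; rewrite subst_id; intros A v; reflexivity.
Qed.
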